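(* Let $g$ be a partial function from $X^M$ to a set $Y$. Then there are a hereditarily thrifty partial function $g'\subseteq g$ and a partial function $h$ from $X^M$ to $X^M$ in $\mathscr C_I$ such that $g=g'\circ h$. In particular, if $Y=X$ and $g\in\mathscr C_J$, then $g'\in\mathscr C_J$, so every (partial) $\mathscr C_J$-function is the composition of a hereditarily thrifty $\mathscr C_J$-function with a $\mathscr C_I$-function.
   Context: $X=\omega\times\omega$, elements $(a|b)$ ($x$-coordinate $a$, $y$-coordinate $b$); $M=\{1,\dots,m\}$. Width of $Y\subseteq X$: $\sup_n|Y\cap(\omega\times\{n\})|$; $I$ = ideal of subsets of $X$ of finite width; $J$ = ideal of subsets of $X$ meeting each line $\omega\times\{n\}$ in a finite set. For an ideal $K$, $\mathscr C_K$ is the set of finitary operations $f:X^n\to X$ with $f[A^n]\in K$ for all $A\in K$; a partial function from $X^M$ to $X$ is in $\mathscr C_K$ iff it has a total extension in $\mathscr C_K$, and a partial function from $X^M$ to $X^M$ is in $\mathscr C_K$ iff each component is. For a finite index set $N$, $B^N_k=\{u\in X^N:\exists i\in N\,((u_i)^y<k)\}$; bounded = contained in some $B^N_k$; a partial $p$ from $X^N$ to $Y$ is thrifty iff $p^{-1}[d]$ is bounded for all $d\in Y$. For $S\subseteq M$, $T=M\setminus S$, $c\in X^S$: $p_{\cup c}(z)=p(z\cup c)$ for $z\in X^T$. A partial $p$ from $X^M$ to $Y$ is hereditarily thrifty iff $p_{\cup c}$ is thrifty for every proper subset $S\subsetneq M$ and every $c\in X^S$. Composition of partial functions: $(g'\circ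 h)(u)$ defined iff $h(u)$ defined and in $\operatorname{dom}(g')$. *)

(* Defs.v *)
From mathcomp Require Import all_boot.
Set Implicit Arguments. Unset Strict Implicit. Unset Printing Implicit Defensive.

(* X = omega x omega; an element (a|b) is the pair (a, b); x-coordinate a = .1,
   y-coordinate b = .2 *)
Definition X : Type := (nat * nat)%type.

(* line omega x {n}: points with y-coordinate n.
   Y has finite width: sup_n |Y ∩ (omega x {n})| < omega. *)
Definition I_ideal (A : X -> Prop) : Prop :=
  exists w : nat, forall n : nat,
    exists l : seq nat, size l <= w /\ forall a, A (a, n) -> a \in l.

Definition J_ideal (A : X -> Prop) : Prop :=
  forall n : nat, exists l : seq nat, forall a, A (a, n) -> a \in l.

Definition inC (K : (X -> Prop) -> Prop) (N : Type) (f : (N -> X) -> X) : Prop :=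
  forall A : X -> Prop, K A ->
    K (fun x => exists u : N -> X, (forall i, A (u i)) /\ f u = x).

(* partial functions are modelled as functions into option *)
Definition pinC (K : (X -> Prop) -> Prop) (N : Type) (p : (N -> X) -> option X) : Prop :=
  exists f : (N -> X) -> X, inC K f /\ forall u x, p u = Some x -> f u = x.

Definition pinC_vec (K : (X -> Prop) -> Prop) (N : Type)
  (h : (N -> X) -> option (N -> X)) : Prop :=
  forall i : N, pinC K (fun u => omap (fun v => v i) (h u)).

Definition psub (A B : Type) (p q : A -> option B) : Prop :=
  forall a b, p a = Some b -> q a = Some b.

Definition pf_comp (A B C : Type) (g : B -> option C) (h : A -> option B) : A -> option C :=
  fun a => match h a with Some b => g b | None => None end.

(* p : X^N -> Y partial is thrifty: p^{-1}[d] is bounded, i.e. contained in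
   some B^N_k = {u | exists i, (u_i)^y < k} *)
Definition thrifty (N Y : Type) (p : (N -> X) -> option Y) : Prop :=
  forall d : Y, exists k : nat, forall u : N -> X, p u = Some d ->
    exists i : N, (u i).2 < k.

(* z ∪ c for z in X^T, c in X^S, where T is the complement of S in 'I_m *)
Definition union_pt (m : nat) (S : {set 'I_m})
  (z : {i : 'I_m | i \notin S} -> X) (c : {i : 'I_m | i \in S} -> X) : 'I_m -> X :=
  fun i => match (insub i : option {i : 'I_m | i \notin S}) with
           | Some t => z t
           | None => match (insub i : option {i : 'I_m | i \in S}) with
                     | Some s => c s
                     | None => (0, 0)  (* unreachable *)
                     end
           end.

Definition hered_thrifty (m : nat) (Y : Type) (p : ('I_m -> X) -> option Y) : Prop :=
  forall S : {set 'I_m}, S != [set: 'I_m] ->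
    forall c : {i : 'I_m | i \in S} -> X,
      thrifty (fun z : {i : 'I_m | i \notin S} -> X => p (union_pt z c)).

(* Main.v *)
Require Import Defs.
From mathcomp Require Import all_boot.
From Stdlib Require Import Classical ClassicalEpsilon FunctionalExtensionality.

Set Implicit Arguments. Unset Strict Implicit. Unset Printing Implicit Defensive.

Lemma least_ex (P : nat -> Prop) : (exists n, P n) -> exists n, P n /\ forall n', P n' -> n <= n'.
Proof.
move=> [n Pn]; elim/ltn_ind: n Pn => n IH Pn.
case: (classic (exists n', P n' /\ n' < n)) => [[n' [Pn' lt]]|hn].
  exact: IH n' lt Pn'.
exists n; split=> // n' Pn'; rewrite leqNgt; apply/negP => lt; apply: hn; by exists n'.
Qed.

Section Constr.
Variable m : nat.
Variable Y : Type.
Variable g : ('I_m -> X) -> option Y.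
Notation V := ('I_m -> X).

Definition ag (S : {set 'I_m}) (u v : V) := forall i, i \in S -> v i = u i.
Definition unb (u : V) (S : {set 'I_m}) := forall k, exists v, ag S u v /\ g v = g u /\
   forall i, i \notin S -> k <= (v i).2.
Definition minS u (S : {set 'I_m}) := unb u S /\ forall S' : {set 'I_m}, S' \proper S -> ~ unb u S'.

Lemma minS_ex u : exists S, minS u S.
Proof.
have H : forall n (S : {set 'I_m}), #|S| <= n -> unb u S -> exists S0, minS u S0.
  elim=> [|n IH] S hS hu;
   (case: (classic (exists S' : {set 'I_m}, S' \proper S /\ unb u S')) => [[S' [hp hu']]|hn];
    [| exists S; split=> // S' hp hu'; apply: hn; by exists S']).
  - by have := leq_trans (proper_card hp) hS.
  - apply: (IH S') => //. rewrite -ltnS. exact: leq_trans (proper_card hp) hS.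
apply: (H #|[set: 'I_m]| setT) => //.
move=> k; exists u; split=> //; split=> // i; by rewrite in_setT.
Qed.

Definition Smin u := epsilon (inhabits set0) (minS u).
Lemma Smin_spec u : minS u (Smin u).
Proof. exact: epsilon_spec (minS_ex u). Qed.

Definition enc (n : nat) : V :=
  match unpickle n : option {ffun 'I_m -> nat * nat} with
  | Some f => fun i => f i | None => fun _ => (0, 0) end.
Lemma enc_surj u : exists n, enc n = u.
Proof.
exists (pickle ([ffun i => u i] : {ffun 'I_m -> nat * nat})).
rewrite /enc pickleK; apply: functional_extensionality => i; by rewrite ffunE.
Qed.

Definition eqv (w u : V) := Smin w = Smin u /\ ag (Smin u) u w /\ g w = g u.
Lemma eqv_refl u : eqv u u.
Proof. by split; [|split]. Qed.

Definition key u := epsilon (inhabits 0)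
  (fun n => eqv (enc n) u /\ forall n', eqv (enc n') u -> n <= n').
Lemma key_spec u : eqv (enc (key u)) u /\ forall n', eqv (enc n') u -> key u <= n'.
Proof.
apply: (epsilon_spec (inhabits 0) (fun n => eqv (enc n) u /\ forall n', eqv (enc n') u -> n <= n')); apply: least_ex.
have [n hn] := enc_surj u; exists n; rewrite hn; exact: eqv_refl.
Qed.
Lemma key_ext u u' : (forall w, eqv w u <-> eqv w u') -> key u = key u'.
Proof.
move=> H; have [h1 h2] := key_spec u; have [h1' h2'] := key_spec u'.
apply/eqP; rewrite eqn_leq h2 ?h2' //; [exact: (proj1 (H _) h1) | exact: (proj2 (H _) h1')].
Qed.
Lemma eqv_ext u u' : Smin u = Smin u' -> (forall j, j \in Smin u -> u j = u' j) ->
  g u = g u' -> forall w, eqv w u <-> eqv w u'.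
Proof.
move=> e ha hg w; rewrite /eqv /ag -e hg.
split=> [[h1 [h2 h3]]|[h1 [h2 h3]]]; (split; [done|split; [move=> j hj|done]]).
  by rewrite h2 // ha.
by rewrite h2 // -ha.
Qed.

Definition pickP n k (z : V) := ag (Smin (enc n)) (enc n) z /\ g z = g (enc n) /\
  forall i, i \notin Smin (enc n) -> k < (z i).2.
Definition pick n k := epsilon (inhabits (fun _ : 'I_m => ((0, 0) : X))) (pickP n k).
Lemma pick_spec n k : pickP n k (pick n k).
Proof.
apply: epsilon_spec. have [hu _] := Smin_spec (enc n).
have [v [h1 [h2 h3]]] := hu k.+1. exists v; split=> //; split=> // i hi; exact: h3.
Qed.

Definition rs (S : {set 'I_m}) (u : V) : V := fun i => if i \in S then u i else (0, 0).
Definition bnd (S : {set 'I_m}) (c : V) (d : option Y) k :=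
  forall v, ag S c v -> g v = d -> exists i, i \notin S /\ (v i).2 < k.
Definition kb u (S : {set 'I_m}) := epsilon (inhabits 0) (bnd S (rs S u) (g u)).
Lemma ag_rs S u v : ag S (rs S u) v <-> ag S u v.
Proof. by rewrite /ag /rs; split=> h i hi; have := h i hi; rewrite hi. Qed.
Lemma kb_spec u S : ~ unb u S -> bnd S (rs S u) (g u) (kb u S).
Proof.
move=> hn; apply: epsilon_spec. apply: NNPP => hne. apply: hn => k.
apply: NNPP => hk. apply: hne; exists k => v hag hg. apply: NNPP => hi.
apply: hk; exists v; split; first by apply/ag_rs. split=> // i hiS.
rewrite leqNgt; apply/negP => lt; apply: hi; by exists i.
Qed.

Definition B u := \max_(S : {set 'I_m}) kb u S.
Definition maxy (z : V) := \max_(i : 'I_m) (z i).2.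

Definition Q0 n k := pick n (maxn k (B (enc n))).
Fixpoint mx n := match n with 0 => 0 | n'.+1 => maxn (mx n') (maxy (Q0 n' (mx n'))) end.
Definition Q n := Q0 n (mx n).

Lemma Q_spec n : ag (Smin (enc n)) (enc n) (Q n) /\ g (Q n) = g (enc n) /\
  forall i, i \notin Smin (enc n) -> mx n < (Q n i).2 /\ B (enc n) < (Q n i).2.
Proof.
have [h1 [h2 h3]] := pick_spec n (maxn (mx n) (B (enc n))).
split=> //; split=> // i hi; have := h3 i hi; rewrite gtn_max => /andP [] //.
Qed.

Lemma mx_mono n k : mx n <= mx (n + k).
Proof.
elim: k => [|k IH]; first by rewrite addn0.
rewrite addnS /=; exact: leq_trans IH (leq_maxl _ _).
Qed.

Lemma Q_below n n' j : n < n' -> (Q n j).2 <= mx n'.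
Proof.
move=> lt. have -> : n' = n.+1 + (n' - n.+1) by rewrite subnKC.
apply: leq_trans (mx_mono _ _). rewrite /=.
apply: leq_trans (leq_maxr _ _). rewrite /maxy /Q. exact: (@leq_bigmax _ (fun i : 'I_m => (Q0 n (mx n) i).2) j).
Qed.

Lemma Q_sep n n' i : i \notin Smin (enc n) -> i \notin Smin (enc n') ->
  (Q n i).2 = (Q n' i).2 -> n = n'.
Proof.
move=> h h' e; case: (ltngtP n n') => // lt.
  have := Q_below i lt; have := ((Q_spec n').2.2 i h').1. rewrite -e => a b.
  by have := leq_trans a b; rewrite ltnn.
have := Q_below i lt; have := ((Q_spec n).2.2 i h).1. rewrite e => a b.
by have := leq_trans a b; rewrite ltnn.
Qed.

Lemma AgQkey u : ag (Smin u) u (Q (key u)).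
Proof.
have [[hS [hag hg]] _] := key_spec u. have [qa _] := Q_spec (key u).
move=> i hi. rewrite qa ?hS // hag //.
Qed.

Lemma gQkey u : g (Q (key u)) = g u.
Proof. by rewrite (Q_spec _).2.1 (key_spec u).1.2.2. Qed.

Definition hh u : option V := if g u is Some _ then Some (Q (key u)) else None.
Definition inD v := exists u, g u <> None /\ Q (key u) = v.
Definition g' v := if excluded_middle_informative (inD v) then g v else None.

Lemma comp_ok u : g u = pf_comp g' hh u.
Proof.
rewrite /pf_comp /hh. case E: (g u) => [y|] //. rewrite /g'.
have hD : inD (Q (key u)) by exists u; rewrite E.
destruct (excluded_middle_informative (inD (Q (key u)))) as [h1|hn]; simpl.
  rewrite gQkey; exact: esym E.
by [].
Qed.

Lemma psub_ok : psub g' g.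
Proof. intros a b. unfold g'. destruct (excluded_middle_informative (inD a)); [exact: id|discriminate]. Qed.

Lemma hh_ok : pinC_vec I_ideal hh.
Proof.
move=> i. exists (fun u => Q (key u) i). split; last first.
  by move=> u x; rewrite /hh; case: (g u) => //= _ [].
move=> A [w hw]. exists w.+1 => t. have [l [hl hA]] := hw t.
pose n0 := epsilon (inhabits 0) (fun n => i \notin Smin (enc n) /\ (Q n i).2 = t).
exists ((Q n0 i).1 :: l); split; first by [].
move=> a [u [hu hq]]. case: (boolP (i \in Smin u)) => hi.
  have := AgQkey hi; rewrite hq => e. by rewrite inE hA ?orbT // e; exact: hu.
have [[hS _] _] := key_spec u. have hi' : i \notin Smin (enc (key u)) by rewrite hS.
have hex : exists n, i \notin Smin (enc n) /\ (Q n i).2 = t by exists (key u); rewrite hq.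
have [hn0 hn0t] := epsilon_spec (inhabits 0) _ hex.
have e := Q_sep hi' hn0 (etrans (f_equal snd hq) (esym hn0t)).
rewrite inE; apply/orP; left; rewrite /n0 -e hq //.
Qed.

Lemma notT_ex (S' : {set 'I_m}) : S' != setT -> exists i0, i0 \notin S'.
Proof.
move=> hS'; apply: NNPP => h; move/negP: hS'; apply; apply/eqP/setP => i.
rewrite in_setT; case: (boolP (i \in S')) => // hi; exfalso; apply h; by exists i.
Qed.

Lemma thr_S S' cf d S : S' != setT -> exists k, forall u, g u <> None -> Smin u = S ->
  ag S' cf (Q (key u)) -> g u = Some d -> exists i, i \notin S' /\ (Q (key u) i).2 < k.
Proof.
move=> HS'.
case: (classic (exists u0, g u0 <> None /\ Smin u0 = S /\ ag S' cf (Q (key u0)) /\ g u0 = Some d))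
  => [[u0 [hn0 [hS0 [ha0 hg0]]]]|hne]; last first.
  exists 0 => u hn hS ha hg; exfalso; apply hne; exists u; by auto.
have agr : forall u, Smin u = S -> ag S' cf (Q (key u)) -> forall j, j \in S -> j \in S' -> u j = cf j.
  move=> u hS ha j hj hj'. by rewrite -(AgQkey (u := u)) ?hS // ha.
case: (boolP (S \subset S')) => hsub.
  have [i0 hi0] := notT_ex HS'.
  exists ((Q (key u0) i0).2.+1) => u hn hS ha hg. exists i0; split=> //.
  suff -> : key u = key u0 by [].
  apply: key_ext; apply: eqv_ext; first by rewrite hS hS0.
    move=> j; rewrite hS => hj. have hj' := subsetP hsub j hj.
    by rewrite (agr u) // (agr u0).
  by rewrite hg hg0.
set S'' := S :&: S'.
have hp : S'' \proper S.
  rewrite properEneq subsetIl andbT; apply/negP => /eqP e; move/negP: hsub; apply.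
  apply/setIidPl; exact: e.
exists (kb u0 S'') => u hn hS ha hg.
set n := key u. have [[hSn [hagn hgn]] _] := key_spec u.
have hnu : ~ unb (enc n) S'' by apply: (Smin_spec (enc n)).2; rewrite hSn hS.
have keq : kb (enc n) S'' = kb u0 S''.
  rewrite /kb; congr (epsilon _ (bnd _ _ _)); last by rewrite hgn hg hg0.
  apply: functional_extensionality => j; rewrite /rs; case: ifP => // hj.
  move: hj; rewrite in_setI => /andP [hj hj'].
  rewrite hagn ?hS // (agr u) // (agr u0) //.
have hb := kb_spec hnu.
have [i [hi hlt]] : exists i, i \notin S'' /\ (Q n i).2 < kb (enc n) S''.
  apply: hb; last by rewrite (Q_spec n).2.1.
  apply/ag_rs => j; rewrite in_setI => /andP [hj _].
  apply: (Q_spec n).1; by rewrite hSn hS.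
exists i. case: (boolP (i \in S)) => hiS.
  by rewrite in_setI hiS /= in hi; rewrite -keq.
exfalso. have hiS' : i \notin Smin (enc n) by rewrite hSn hS.
have b := ((Q_spec n).2.2 i hiS').2.
have a : kb (enc n) S'' <= B (enc n) by exact: (@leq_bigmax _ (fun S0 => kb (enc n) S0) S'').
by have := leq_trans hlt (leq_trans a (ltnW b)); rewrite ltnn.
Qed.

Lemma thr_main S' (cf : V) d : S' != setT -> exists k, forall v, ag S' cf v ->
  g' v = Some d -> exists i, i \notin S' /\ (v i).2 < k.
Proof.
move=> HS'.
pose kf S := epsilon (inhabits 0) (fun k => forall u, g u <> None -> Smin u = S ->
  ag S' cf (Q (key u)) -> g u = Some d -> exists i, i \notin S' /\ (Q (key u) i).2 < k).
exists (\max_(S : {set 'I_m}) kf S) => v ha. rewrite /g'.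
destruct (excluded_middle_informative (inD v)) as [[u [hn hv]]|hn]; last by [].
simpl => hg. subst v.
have := epsilon_spec (inhabits 0) _ (thr_S cf d (Smin u) HS').
move=> /(_ u hn erefl ha); rewrite -gQkey => /(_ hg) [i [hi hlt]].
exists i; split=> //. apply: leq_trans hlt _. exact: (@leq_bigmax _ kf (Smin u)).
Qed.

Lemma union_S (S' : {set 'I_m}) z z' (c : {i : 'I_m | i \in S'} -> X) i :
  i \in S' -> union_pt z c i = union_pt z' c i.
Proof.
move=> hi; rewrite /union_pt; case: insubP => [t Ht _|_] //.
by rewrite hi in Ht.
Qed.

Lemma hered_ok : hered_thrifty g'.
Proof.
move=> S' hS' c d.
have [k hk] := thr_main (union_pt (fun _ => ((0, 0) : X)) c) d hS'.
exists k => z hz.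
have [i [hi hlt]] := hk (union_pt z c) (fun j hj => union_S _ _ _ hj) hz.
exists (exist _ i hi). move: hlt; rewrite /union_pt insubT //.
Qed.

End Constr.

Theorem mainTheorem8 (m : nat) :
  (forall (Y : Type) (g : ('I_m -> X) -> option Y),
     exists (g' : ('I_m -> X) -> option Y) (h : ('I_m -> X) -> option ('I_m -> X)),
       psub g' g /\ hered_thrifty g' /\ pinC_vec I_ideal h /\
       forall u, g u = pf_comp g' h u)
  /\
  (forall g : ('I_m -> X) -> option X, pinC J_ideal g ->
     exists (g' : ('I_m -> X) -> option X) (h : ('I_m -> X) -> option ('I_m -> X)),
       psub g' g /\ hered_thrifty g' /\ pinC J_ideal g' /\ pinC_vec I_ideal h /\
       forall u, g u = pf_comp g' h u).
Proof.
split.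
  move=> Y g; exists (g' g), (hh g).
  split; [exact: psub_ok|split; [exact: hered_ok|split; [exact: hh_ok|exact: comp_ok]]].
move=> g [f [hf hfg]]; exists (g' g), (hh g).
split; first exact: psub_ok. split; first exact: hered_ok.
split; first by exists f; split=> // u x hx; apply: hfg; exact: psub_ok hx.
split; [exact: hh_ok|exact: comp_ok].
Qed.
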